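(* Let $N=1$. For all choices of the unitaries $U_1,\dots,U_L$ and of the Hermitian unitary $\tilde O$, the following control tensors vanish identically (for all window strings $\vec n$ with $L\ge n_1\ge\cdots\ge n_k\ge1$ satisfying the indicated equalities): (i) $k=2$: $\mathbf{T}^{(2)}_{(1)}(n_1,n_2)=0$ whenever $n_1=n_2$. (ii) $k=3$: $\mathbf{T}^{(3)}_{(0,1)}(\vec n)=0$ and $\mathbf{T}^{(3)}_{(1,0)}(\vec n)=0$ whenever $n_2=n_3$; $\mathbf{T}^{(3)}_{(1,1)}(\vec n)=0$ whenever $n_1=n_2$. (iii) $k=4$: $\mathbf{T}^{(4)}_{\mu}(\vec n)=0$ in each of the cases: $\mu=(0,0,1)$ with $n_3=n_4$; $\mu=(0,1,0)$ with $n_3=n_4$; $\mu=(0,1,0)$ with $n_2=n_3$; $\mu=(0,1,1)$ with $n_2=n_3$; $\mu=(1,0,0)$ with $n_2=n_3$; $\mu=(1,0,0)$ with $n_1=n_2$; $\mu=(1,0,1)$ with $n_2=n_3$; $\mu=(1,0,1)$ with $n_1=n_2$; $\mu=(1,1,0)$ with $n_1=n_2$; $\mu=(1,1,0)$ with $n_3=n_4$; $\mu=(1,1,1)$ with $n_1=n_2$.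
   Context: Fix integers $L\ge 1$ and $N\ge 1$, and a set $Q$ of $N$ qubit labels. For $q\in Q$ let $\sigma_z^{[q]}$ denote the Pauli-$Z$ operator acting on qubit $q$ tensored with the identity on all other qubits of $(\mathbb{C}^2)^{\otimes N}$. (Digital control) Let $U_1,\dots,U_L$ be arbitrary unitaries on $(\mathbb{C}^2)^{\otimes N}$ ($U_n$ is the control propagator, constant on the $n$-th time window), and let $\tilde O$ be an arbitrary Hermitian unitary operator on $(\mathbb{C}^2)^{\otimes N}$ (the toggling-frame observable). For $q\in Q$ and $n\in\{1,\dots,L\}$ define $\tilde h_q(n)=U_n^\dagger\sigma_z^{[q]}U_n$ and $\bar h_q(n)=-\tilde O^{-1}\tilde h_q(n)\tilde O$. For $k\ge1$, a window string $\vec n=(n_1,\dots,n_k)$ with $L\ge n_1\ge\cdots\ge n_k\ge1$, a qubit string $\vec q=(q_1,\dots,q_k)\in Q^k$ and a sign string $\mu\in\{0,1\}^{k-1}$, the (window-framed) control tensor is $$\mathbf{T}^{(k)}_{\vec q;\mu}(\vec n)=\sum_{b\in\{0,1\}^k}(-1)^{\sum_{j=1}^{k-1}\mu_j b_{j+1}}\Big(\prod^{\downarrow}_{i:\,b_i=1}\bar h_{q_i}(n_i)\Big)\Big(\prod^{\uparrow}_{i:\,b_i=0}\tilde h_{q_i}(n_i)\Big),$$ where $\prod^{\downarrow}$ is the ordered product with the index $i$ decreasing from left to right, $\prod^{\uparrow}$ is the ordered product with $i$ increasing from left to right, and an empty product is the identity. When $N=1$ the qubit string is omitted and we write $\mathbf{T}^{(k)}_{\mu}(\vec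 n)$. *)

(* Defs.v *)
(* Single qubit (N = 1): operators are 2x2 matrices over an
   arbitrary numClosedFieldType C (e.g. the complex numbers), conj = Num.conj. *)
From HB Require Import structures.
From mathcomp Require Import all_boot all_order all_algebra.
Set Implicit Arguments. Unset Strict Implicit. Unset Printing Implicit Defensive.
Import Order.TTheory GRing.Theory Num.Theory.
Local Open Scope ring_scope.

Section Defs.
Variable C : numClosedFieldType.

Definition adj (A : 'M[C]_2) : 'M[C]_2 := map_mx Num.conj (A^T).

Definition unitary (A : 'M[C]_2) : Prop := A *m adj A = 1%:M /\ adj A *m A = 1%:M.
Definition is_hermitian (A : 'M[C]_2) : Prop := adj A = A.

Definition sigma_z : 'M[C]_2 :=
  \matrix_(i < 2, j < 2) (if i == j then (if i == 0 :> nat then 1 else -1) else 0).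

Definition htil (U : nat -> 'M[C]_2) (n : nat) : 'M[C]_2 :=
  adj (U n) *m sigma_z *m U n.

Definition hbar (U : nat -> 'M[C]_2) (O : 'M[C]_2) (n : nat) : 'M[C]_2 :=
  - (invmx O *m htil U n *m O).

(* Control tensor T^{(k)}_mu(n_1..n_k), with k = size ns; indices are 0-based:
   ns = [n_1; ...; n_k], mu = [mu_1; ...; mu_{k-1}], b = [b_1; ...; b_k].
   sign: (-1)^{sum_{j=1}^{k-1} mu_j b_{j+1}}; first product: i decreasing over
   {i | b_i = 1} of hbar; second: i increasing over {i | b_i = 0} of htil. *)
Definition ctensor (U : nat -> 'M[C]_2) (O : 'M[C]_2) (ns : seq nat)
    (mu : seq bool) : 'M[C]_2 :=
  \sum_(b : (size ns).-tuple bool)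
    ((-1) ^+ (\sum_(j < (size ns).-1) (nth false mu j && nth false b j.+1))%N
     *: ((\prod_(i <- rev (iota 0 (size ns)) | nth false b i) hbar U O (nth 0%N ns i))
         * (\prod_(i <- iota 0 (size ns) | ~~ nth false b i) htil U (nth 0%N ns i)))).

End Defs.

Definition window (L : nat) (ns : seq nat) : bool :=
  sorted geq ns && all (fun n => (0 < n <= L)%N) ns.

(* Main.v *)
Require Import Defs.
From HB Require Import structures.
From mathcomp Require Import all_boot all_order all_algebra.
Set Implicit Arguments. Unset Strict Implicit. Unset Printing Implicit Defensive.
Import Order.TTheory GRing.Theory Num.Theory.
Local Open Scope ring_scope.

Definition flipb (j i : nat) (x : bool) := ((i == j) || (i == j.+1)) (+) x.
Definition phis j (s : seq bool) := [seq flipb j p.1 p.2 | p <- zip (iota 0 (size s)) s].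
Lemma size_phis j s : size (phis j s) = size s.
Proof. by rewrite size_map size_zip size_iota minnn. Qed.
Lemma phisK_aux j m s :
  [seq flipb j p.1 p.2 | p <- zip (iota m (size s))
     [seq flipb j p.1 p.2 | p <- zip (iota m (size s)) s]] = s.
Proof.
elim: s m => [|x s IH] m //=.
by rewrite /flipb addKb IH.
Qed.
Lemma phisK j s : phis j (phis j s) = s.
Proof. by rewrite /phis size_map size_zip size_iota minnn phisK_aux. Qed.
Lemma phi_proof k j (t : k.-tuple bool) : size (phis j t) == k.
Proof. by rewrite size_phis size_tuple. Qed.
Definition phi k j (t : k.-tuple bool) : k.-tuple bool := Tuple (phi_proof j t).
Lemma phiK k j : involutive (@phi k j).
Proof. move=> t; apply: val_inj => /=; exact: phisK. Qed.

Lemma tuple_sum_zero (C : numClosedFieldType) k j (F : k.-tuple bool -> 'M[C]_2) :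
  (forall t, F (phi j t) = - F t) -> \sum_t F t = 0.
Proof.
move=> H.
have e : \sum_t F t = - \sum_t F t.
  rewrite {1}(reindex_inj (inv_inj (@phiK k j))) /=.
  rewrite -sumrN.
  by apply: eq_bigr => t _; rewrite H.
apply/matrixP => a b; rewrite mxE.
have : (\sum_t F t) a b *+ 2 == 0.
  by rewrite mulr2n {1}e mxE addNr.
by rewrite mulrn_eq0 /= => /eqP.
Qed.

Lemma cancel2 (R : nzRingType) (x : R) : x * x = 1 -> forall y : R, y * x * x = y.
Proof. by move=> h y; rewrite -mulrA h mulr1. Qed.

Definition ct (C : numClosedFieldType) (f g : nat -> 'M[C]_2) (ns : seq nat)
    (mu : seq bool) : 'M[C]_2 :=
  \sum_(b : (size ns).-tuple bool)
    ((-1) ^+ (\sum_(j < (size ns).-1) (nth false mu j && nth false b j.+1))%N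
     *: ((\prod_(i <- rev (iota 0 (size ns)) | nth false b i) f (nth 0%N ns i))
         * (\prod_(i <- iota 0 (size ns) | ~~ nth false b i) g (nth 0%N ns i)))).

Lemma ctE (C : numClosedFieldType) (U : nat -> 'M[C]_2) O ns mu :
  ctensor U O ns mu = ct (hbar U O) (htil U) ns mu.
Proof. by []. Qed.

Lemma sz_sq (C : numClosedFieldType) : sigma_z C *m sigma_z C = 1%:M.
Proof.
apply/matrixP => i j; rewrite !mxE !big_ord_recr big_ord0 /= !mxE.
by case: i => [[|[|?]] ?] //; case: j => [[|[|?]] ?] //=;
  rewrite ?mulr0 ?mul0r ?addr0 ?add0r ?mulr1 ?mulNr ?mul1r ?opprK.
Qed.

Lemma htil_sq (C : numClosedFieldType) (U : nat -> 'M[C]_2) n :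
  unitary (U n) -> htil U n * htil U n = 1.
Proof.
move=> [H1 H2]; rewrite /htil -!mulmxE.
rewrite -!mulmxA (mulmxA (U n)) H1 mul1mx (mulmxA (sigma_z C)) sz_sq mul1mx.
by rewrite H2.
Qed.

Lemma hbar_sq (C : numClosedFieldType) (U : nat -> 'M[C]_2) O n :
  unitary O -> unitary (U n) -> hbar U O n * hbar U O n = 1.
Proof.
move=> [O1 _] Hu; rewrite /hbar mulrNN -!mulmxE.
have [Ou _] := mulmx1_unit O1.
rewrite -!mulmxA (mulmxA O) (mulmxV Ou) mul1mx.
case: Hu => H1 H2.
rewrite (mulmxA (U n)) H1 mul1mx (mulmxA (sigma_z C)) sz_sq mul1mx.
by rewrite (mulmxA (adj (U n))) H2 mul1mx mulVmx.
Qed.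

Lemma win_sq (C : numClosedFieldType) (L : nat) (U : nat -> 'M[C]_2) O ns :
  (forall n, (1 <= n <= L)%N -> unitary (U n)) -> unitary O ->
  window L ns -> forall n, n \in ns ->
  hbar U O n * hbar U O n = 1 /\ htil U n * htil U n = 1.
Proof.
move=> hU hO /andP[_ /allP W] n /W Hn.
have Hu := hU n Hn.
by split; [apply: hbar_sq | apply: htil_sq].
Qed.

Ltac solve_case j :=
  rewrite /ct; apply: (@tuple_sum_zero _ _ j);
  let s := fresh "s" in let Hs := fresh "Hs" in
  move=> [s Hs];
  case: s Hs => [|b0 [|b1 [|b2 [|b3 [|? ?]]]]] // Hs;
  repeat match goal with b : bool |- _ => case: b Hs => Hs end;
  rewrite /rev /= !big_ord_recr !big_ord0 /= !big_cons !big_nil /=;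
  rewrite !exprD /= ?expr0 ?expr1 ?mulr1 ?mul1r ?mulrNN ?scale1r ?scaleN1r ?opprK;
  rewrite ?mulr1 ?mul1r ?mulrA;
  repeat match goal with H : ?x * ?x = 1 |- _ =>
    rewrite ?H ?(cancel2 H) ?mul1r; clear H end;
  rewrite ?scale1r ?scaleN1r ?opprK ?mulN1r ?mulr1 ?mul1r;
  try done.

Ltac prep win :=
  let W := fresh "W" in let e := fresh "e" in
  intros; rewrite ctE;
  match goal with
  | Hw : is_true (window _ _) |- _ => have W := win _ Hw
  end;
  match goal with
  | e : _ = _ |- _ => subst
  end;
  repeat match goal with
  | x : nat |- _ =>
      match goal with H : hbar _ _ x * _ = 1 |- _ => fail 1 | _ =>
      let H1 := fresh "H" in let H2 := fresh "H" in
      destruct (W x ltac:(rewrite !inE eqxx ?orbT; done)) as [H1 H2] end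
  end;
  clear W win;
  repeat match goal with H : _ * _ = 1 |- _ => revert H end;
  match goal with |- context [ct ?f ?g] => generalize f g end;
  let f := fresh "f" in let g := fresh "g" in intros f g; intros.

Unset Implicit Arguments.
Theorem mainTheorem5 (C : numClosedFieldType) (L : nat)
    (U : nat -> 'M[C]_2) (O : 'M[C]_2) :
  (1 <= L)%N ->
  (forall n, (1 <= n <= L)%N -> unitary (U n)) ->
  is_hermitian O -> unitary O ->
  let T := ctensor U O in
  (* (i) k = 2 *)
  (forall n1 n2, window L [:: n1; n2] -> n1 = n2 ->
     T [:: n1; n2] [:: true] = 0) /\
  (* (ii) k = 3 *)
  (forall n1 n2 n3, window L [:: n1; n2; n3] -> n2 = n3 ->
     T [:: n1; n2; n3] [:: false; true] = 0) /\
  (forall n1 n2 n3, window L [:: n1; n2; n3] -> n2 = n3 ->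
     T [:: n1; n2; n3] [:: true; false] = 0) /\
  (forall n1 n2 n3, window L [:: n1; n2; n3] -> n1 = n2 ->
     T [:: n1; n2; n3] [:: true; true] = 0) /\
  (* (iii) k = 4 *)
  (forall n1 n2 n3 n4, window L [:: n1; n2; n3; n4] -> n3 = n4 ->
     T [:: n1; n2; n3; n4] [:: false; false; true] = 0) /\
  (forall n1 n2 n3 n4, window L [:: n1; n2; n3; n4] -> n3 = n4 ->
     T [:: n1; n2; n3; n4] [:: false; true; false] = 0) /\
  (forall n1 n2 n3 n4, window L [:: n1; n2; n3; n4] -> n2 = n3 ->
     T [:: n1; n2; n3; n4] [:: false; true; false] = 0) /\
  (forall n1 n2 n3 n4, window L [:: n1; n2; n3; n4] -> n2 = n3 ->
     T [:: n1; n2; n3; n4] [:: false; true; true] = 0) /\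
  (forall n1 n2 n3 n4, window L [:: n1; n2; n3; n4] -> n2 = n3 ->
     T [:: n1; n2; n3; n4] [:: true; false; false] = 0) /\
  (forall n1 n2 n3 n4, window L [:: n1; n2; n3; n4] -> n1 = n2 ->
     T [:: n1; n2; n3; n4] [:: true; false; false] = 0) /\
  (forall n1 n2 n3 n4, window L [:: n1; n2; n3; n4] -> n2 = n3 ->
     T [:: n1; n2; n3; n4] [:: true; false; true] = 0) /\
  (forall n1 n2 n3 n4, window L [:: n1; n2; n3; n4] -> n1 = n2 ->
     T [:: n1; n2; n3; n4] [:: true; false; true] = 0) /\
  (forall n1 n2 n3 n4, window L [:: n1; n2; n3; n4] -> n1 = n2 ->
     T [:: n1; n2; n3; n4] [:: true; true; false] = 0) /\
  (forall n1 n2 n3 n4, window L [:: n1; n2; n3; n4] -> n3 = n4 ->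
     T [:: n1; n2; n3; n4] [:: true; true; false] = 0) /\
  (forall n1 n2 n3 n4, window L [:: n1; n2; n3; n4] -> n1 = n2 ->
     T [:: n1; n2; n3; n4] [:: true; true; true] = 0).
Proof.
move=> _ hU _ hO; cbv zeta.
have win := fun ns => @win_sq C L U O ns hU hO.
split; first by prep win; solve_case 0%N.
split; first by prep win; solve_case 1%N.
split; first by prep win; solve_case 1%N.
split; first by prep win; solve_case 0%N.
split; first by prep win; solve_case 2%N.
split; first by prep win; solve_case 2%N.
split; first by prep win; solve_case 1%N.
split; first by prep win; solve_case 1%N.
split; first by prep win; solve_case 1%N.
split; first by prep win; solve_case 0%N.
split; first by prep win; solve_case 1%N.
split; first by prep win; solve_case 0%N.
split; first by prep win; solve_case 0%N.
split; first by prep win; solve_case 2%N.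
by prep win; solve_case 0%N.
Qed.
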